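(* Let $\Omega_1=\{(u,v)\in\mathbb{C}^2: |u^2|+|v^2|-1<|u^2+v^2-1|\}$. Then $\{1-u^2-v^2:(u,v)\in\Omega_1\}\subset\mathbb{C}-(-\infty,0]$. *)

(* Defs.v *)
From HB Require Import structures.
From mathcomp Require Import all_boot all_order all_algebra.
From mathcomp Require Export complex.
Set Implicit Arguments. Unset Strict Implicit. Unset Printing Implicit Defensive.
Import Order.TTheory GRing.Theory Num.Theory.
Local Open Scope ring_scope.

Definition Omega1 (R : rcfType) (u v : R[i]) : Prop :=
  `|u ^+ 2| + `|v ^+ 2| - 1 < `|u ^+ 2 + v ^+ 2 - 1|.

Definition slit_plane (R : rcfType) (z : R[i]) : Prop :=
  ~ (complex.Im z = 0 /\ complex.Re z <= 0).

(* Main.v *)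
Require Import Defs.
From HB Require Import structures.
From mathcomp Require Import all_boot all_order all_algebra.
From mathcomp Require Import complex.
From mathcomp Require Import ring.
Import Order.TTheory GRing.Theory Num.Theory.
Local Open Scope ring_scope.

Theorem lemma4p5 (R : rcfType) (u v : R[i]) :
  Omega1 u v -> slit_plane (1 - u ^+ 2 - v ^+ 2).
Proof.
rewrite /Omega1 /slit_plane => H [HI HR].
have Hz : 1 - u ^+ 2 - v ^+ 2 <= 0.
  rewrite lecE; apply/andP; split; [by apply/eqP; rewrite HI | exact: HR].
set w := u ^+ 2 + v ^+ 2 - 1.
have Hw : 0 <= w.
  have -> : w = - (1 - u ^+ 2 - v ^+ 2) by rewrite /w; ring.
  by rewrite oppr_ge0.
have Hw1 : 0 <= u ^+ 2 + v ^+ 2.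
  by have := Hw; rewrite /w subr_ge0 => /(le_trans ler01).
move: H; rewrite -/w (ger0_norm Hw).
have := ler_normD (u ^+ 2) (v ^+ 2); rewrite (ger0_norm Hw1) => Hn.
have : w <= `|u ^+ 2| + `|v ^+ 2| - 1 by rewrite /w lerD2r.
by move=> Hle Hlt; move: (le_lt_trans Hle Hlt); rewrite ltxx.
Qed.
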